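(* Let $M$ be a closed, oriented, triangulated surface and let $C\subset M$ be a simple closed curve which is a subcomplex of $M$ and separates $M$ into two compact subsurfaces $A_1$ and $A_2$ (subcomplexes) with $A_1\cap A_2=C$, where $A_1$ is homeomorphic to a closed oriented surface $M_1$ of genus $g_1$ with an open disk removed and $A_2$ is homeomorphic to a closed oriented surface $M_2$ of genus $g_2$ with an open disk removed (so $M=M_1\#_C M_2$). Let $f$ be a perfect discrete Morse function on $M$ with gradient vector field $V$ such that the critical vertex and exactly $2g_1$ of the critical edges of $f$ lie in $A_1$, and the critical $2$-cell and the remaining $2g_2$ critical edges lie in $A_2\setminus C$. Assume further that no arrow on $C$ points into $A_2$, i.e. every vertex and edge of $C$ is paired by $V$ either with a cell of $C$ or with a cell of $A_1$ not in $C$. Let $D_1$ and $D_2$ be disks triangulated as cones over $C$, so that $A_1\cup_C D_1\cong M_1$ and $A_2\cup_C D_2\cong M_2$. Then there exist perfect discrete Morse functions $f_1$ on $A_1\cup_C D_1$ and $f_2$ on $A_2\cup_C D_2$ such that $f_1$ agrees with $f$ on $A_1$, $f_2$ agrees with $f$ on $A_2$, and the gradient vector field of $f_i$ extends the restriction of $V$ to the pairs with both cells in $A_i$ ($i=1,2$).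
   Context: A discrete Morse function on a finite regular cell complex $K$ is a function $f$ from the set of cells to $\mathbb R$ such that for every $p$-cell $\sigma$, at most one $(p+1)$-coface $\tau$ satisfies $f(\tau)\le f(\sigma)$ and at most one $(p-1)$-face $\nu$ satisfies $f(\nu)\ge f(\sigma)$; a cell is critical if neither exception occurs. Its gradient vector field $V$ is the set of pairs $(\sigma,\tau)$ (''arrows'' from $\sigma$ to $\tau$), $\sigma$ a codimension-one face of $\tau$, with $f(\sigma)\ge f(\tau)$; each cell lies in at most one pair and the critical cells are those in no pair. $f$ is perfect if the number of critical $p$-cells equals $\operatorname{rank}H_p(K)$ for every $p$; for a closed oriented surface of genus $g$ this means one critical vertex, $2g$ critical edges and one critical $2$-cell. *)

(* Defs.v *)
From HB Require Import structures.
From mathcomp Require Import all_boot all_order all_algebra.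
Set Implicit Arguments. Unset Strict Implicit. Unset Printing Implicit Defensive.
Import Order.TTheory GRing.Theory Num.Theory.

Section Complexes.
Variable T : finType.
Implicit Types (K : {set {set T}}) (s t : {set T}).

Definition is_complex K :=
  (set0 \notin K) &&
  [forall s in K, forall t : {set T}, (t \subset s) && (t != set0) ==> (t \in K)].

Definition is_subcomplex (L K : {set {set T}}) := is_complex L && (L \subset K).

Definition cells K (p : nat) := [set s in K | #|s| == p.+1].

Definition is_facet s t := (s \subset t) && (#|t| == #|s|.+1).

Definition euler_char K : int :=
  (#|cells K 0|%:Z - #|cells K 1|%:Z + #|cells K 2|%:Z)%R.

Definition pure2 K :=
  forall s, s \in K -> (#|s| <= 3)%N /\ exists2 t, t \in cells K 2 & s \subset t.

Definition edges_in_two K :=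
  forall e, e \in cells K 1 -> #|[set t in cells K 2 | e \subset t]| = 2.

Definition adj K : rel T := fun u v => (u != v) && ([set u; v] \in K).
Definition connected_cx K :=
  forall u v, [set u] \in K -> [set v] \in K -> connect (adj K) u v.

Definition link_adj K (v : T) : rel T := fun u w => [set v; u; w] \in cells K 2.
Definition links_connected K :=
  forall v u w, [set v; u] \in cells K 1 -> [set v; w] \in cells K 1 ->
    connect (link_adj K v) u w.

Definition closed_surface K :=
  [/\ is_complex K, K != set0, pure2 K, edges_in_two K
    & links_connected K /\ connected_cx K].

(* coherent orientation: a cyclic order O t on each triangle t, such that
   triangles sharing an edge induce opposite orientations on it *)
Definition orientable K := exists O : {set T} -> T -> T,
  [/\ (forall t, t \in cells K 2 -> forall x, x \in t -> (O t x \in t) /\ (O t x != x)),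
      (forall t, t \in cells K 2 -> {in t &, injective (O t)})
    & (forall t t' u v, t \in cells K 2 -> t' \in cells K 2 -> t != t' ->
        u \in t -> v \in t -> u \in t' -> v \in t' -> O t u = v -> O t' v = u)].

Definition surface_of_genus K (g : nat) :=
  [/\ closed_surface K, orientable K & euler_char K = (2 - 2 * g%:Z)%R].

Definition simple_closed_curve K :=
  [/\ is_complex K, K != set0, (forall s, s \in K -> #|s| <= 2)%N,
      (forall v, [set v] \in K -> #|[set e in cells K 1 | v \in e]| = 2)
    & connected_cx K].

Variable R : realFieldType.
Implicit Types (f : {set T} -> R).

Definition discrete_morse K f :=
  forall s, s \in K ->
    (#|[set t in K | is_facet s t & (f t <= f s)%R]| <= 1)%N /\
    (#|[set t in K | is_facet t s & (f s <= f t)%R]| <= 1)%N.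

Definition critical K f s :=
  [&& s \in K,
      [forall t in K, is_facet s t ==> (f s < f t)%R] &
      [forall t in K, is_facet t s ==> (f t < f s)%R]].

Definition gradient K f : {set {set T} * {set T}} :=
  [set p | [&& p.1 \in K, p.2 \in K, is_facet p.1 p.2 & (f p.2 <= f p.1)%R]].

Definition ncrit K f (p : nat) := #|[set s | critical K f s & #|s| == p.+1]|.

(* perfect discrete Morse function on a closed oriented surface of genus g:
   ranks of homology are 1, 2g, 1 *)
Definition perfect_surface K (g : nat) f :=
  [/\ discrete_morse K f, ncrit K f 0 = 1%N, ncrit K f 1 = (2 * g)%N
    & ncrit K f 2 = 1%N].

End Complexes.

Definition lift_simplex (T : finType) (s : {set T}) : {set option T} :=
  [set Some x | x in s].

(* A ∪_C D, where D is the cone over C with apex None *)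
Definition cone_glue (T : finType) (A C : {set {set T}}) : {set {set option T}} :=
  [set lift_simplex s | s in A] :|: [set None |: lift_simplex s | s in C]
  :|: [set [set None]].

(* Main.v *)
Require Import Defs.
From HB Require Import structures.
From mathcomp Require Import all_boot all_order all_algebra.
From mathcomp Require Import lra zify.
Import Order.TTheory GRing.Theory Num.Theory.

Module Part1.
Set Implicit Arguments. Unset Strict Implicit. Unset Printing Implicit Defensive.
Import Order.TTheory GRing.Theory Num.Theory.

Section Lift.
Variable T : finType.
Implicit Types (s t : {set T}) (A C : {set {set T}}).

Definition cone_of s : {set option T} := None |: lift_simplex s.
Definition un (X : {set option T}) : {set T} := [set x | Some x \in X].

Lemma mem_lift s x : (Some x \in lift_simplex s) = (x \in s).
Proof. by rewrite /lift_simplex (mem_imset _ _ (@Some_inj _)). Qed.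

Lemma None_lift s : None \notin lift_simplex s.
Proof. by apply/imsetP => -[]. Qed.

Lemma None_cone s : None \in cone_of s.
Proof. by rewrite /cone_of setU11. Qed.

Lemma mem_cone s x : (Some x \in cone_of s) = (x \in s).
Proof. by rewrite /cone_of in_setU1 mem_lift. Qed.

Lemma un_lift s : un (lift_simplex s) = s.
Proof. by apply/setP => x; rewrite inE mem_lift. Qed.

Lemma un_cone s : un (cone_of s) = s.
Proof. by apply/setP => x; rewrite inE mem_cone. Qed.

Lemma lift_inj : injective (@lift_simplex T).
Proof. by move=> s t /(congr1 un); rewrite !un_lift. Qed.

Lemma cone_inj : injective cone_of.
Proof. by move=> s t /(congr1 un); rewrite !un_cone. Qed.

Lemma lift_neq_cone s t : lift_simplex s != cone_of t.
Proof. by apply/eqP => E; have := None_cone t; rewrite -E (negbTE (None_lift _)). Qed.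

Lemma card_lift s : #|lift_simplex s| = #|s|.
Proof. by rewrite card_imset //; apply: Some_inj. Qed.

Lemma card_cone s : #|cone_of s| = #|s|.+1.
Proof. by rewrite /cone_of cardsU1 None_lift card_lift. Qed.

Lemma sub_lift s t : (lift_simplex s \subset lift_simplex t) = (s \subset t).
Proof.
apply/subsetP/subsetP => H x.
  by move=> xs; have := H (Some x); rewrite !mem_lift; apply.
by case: x => [x|]; [rewrite !mem_lift; apply: H | rewrite (negbTE (None_lift _))].
Qed.

Lemma sub_lift_cone s t : (lift_simplex s \subset cone_of t) = (s \subset t).
Proof.
apply/subsetP/subsetP => H x.
  by move=> xs; have := H (Some x); rewrite mem_lift mem_cone; apply.
by case: x => [x|]; [rewrite mem_lift mem_cone; apply: H | rewrite (negbTE (None_lift _))].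
Qed.

Lemma sub_cone_lift s t : (cone_of s \subset lift_simplex t) = false.
Proof. by apply/negP => /subsetP /(_ None (None_cone _)); rewrite (negbTE (None_lift _)). Qed.

Lemma sub_cone s t : (cone_of s \subset cone_of t) = (s \subset t).
Proof.
apply/subsetP/subsetP => H x.
  by move=> xs; have := H (Some x); rewrite !mem_cone; apply.
by case: x => [x|]; [rewrite !mem_cone; apply: H | rewrite !None_cone].
Qed.

Lemma facet_lift s t : is_facet (lift_simplex s) (lift_simplex t) = is_facet s t.
Proof. by rewrite /is_facet sub_lift !card_lift. Qed.

Lemma facet_cone s t : is_facet (cone_of s) (cone_of t) = is_facet s t.
Proof. by rewrite /is_facet sub_cone !card_cone. Qed.

Lemma facet_cone_lift s t : is_facet (cone_of s) (lift_simplex t) = false.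
Proof. by rewrite /is_facet sub_cone_lift. Qed.

Lemma facet_lift_cone s t : is_facet (lift_simplex s) (cone_of t) = (s == t).
Proof.
rewrite /is_facet sub_lift_cone card_lift card_cone eqSS.
apply/andP/eqP => [[st /eqP ct]|->]; last by rewrite subxx.
by apply/eqP; rewrite eqEcard st ct leqnn.
Qed.

Definition C0 C := set0 |: C.

Lemma cone0 : cone_of set0 = [set None].
Proof. by rewrite /cone_of /lift_simplex imset0 setU0. Qed.

Lemma mem_cg A C X : (X \in cone_glue A C) =
  (X \in (@lift_simplex T) @: A) || (X \in cone_of @: C0 C).
Proof.
rewrite /cone_glue /C0 !inE -orbA; congr (_ || _).
by rewrite imsetU1 in_setU1 cone0 orbC.
Qed.

Lemma lift_cg A C s : set0 \notin A -> (lift_simplex s \in cone_glue A C) = (s \in A).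
Proof.
move=> A0; rewrite mem_cg (mem_imset _ _ lift_inj).
have -> : (lift_simplex s \in cone_of @: C0 C) = false; last by rewrite orbF.
by apply/imsetP => -[t _ /eqP]; rewrite (negbTE (lift_neq_cone _ _)).
Qed.

Lemma cone_cg A C s : (cone_of s \in cone_glue A C) = (s \in C0 C).
Proof.
rewrite mem_cg (mem_imset _ _ cone_inj).
have -> : (cone_of s \in (@lift_simplex T) @: A) = false; last by [].
by apply/imsetP => -[t _ /eqP]; rewrite eq_sym (negbTE (lift_neq_cone _ _)).
Qed.

Lemma cg_forall A C (P : pred {set option T}) : set0 \notin A ->
  [forall X in cone_glue A C, P X] =
  [forall s in A, P (lift_simplex s)] && [forall s in C0 C, P (cone_of s)].
Proof.
move=> A0; apply/forall_inP/andP => [H|[/forall_inP H1 /forall_inP H2] X].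
  split; apply/forall_inP => s sA; apply: H.
    by rewrite lift_cg. by rewrite cone_cg.
rewrite mem_cg => /orP[] /imsetP[s sA ->]; by [apply: H1 | apply: H2].
Qed.

Lemma cg_cases A C X : X \in cone_glue A C ->
  (exists2 s, s \in A & X = lift_simplex s) \/ (exists2 s, s \in C0 C & X = cone_of s).
Proof. by rewrite mem_cg => /orP[] /imsetP[s sA ->]; [left|right]; exists s. Qed.

End Lift.

End Part1.
Import Part1.

Module Part2.
Set Implicit Arguments. Unset Strict Implicit. Unset Printing Implicit Defensive.
Import Order.TTheory GRing.Theory Num.Theory.
Local Open Scope ring_scope.

Section Glue.
Variables (T : finType) (R : realFieldType).
Variables (A C : {set {set T}}) (f g : {set T} -> R).
Hypothesis A0 : set0 \notin A.
Hypothesis CA : C \subset A.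

Definition ext (X : {set option T}) : R := if None \in X then g (un X) else f (un X).

Lemma ext_lift s : ext (lift_simplex s) = f s.
Proof. by rewrite /ext (negbTE (None_lift _)) un_lift. Qed.
Lemma ext_cone s : ext (cone_of s) = g s.
Proof. by rewrite /ext None_cone un_cone. Qed.

Local Notation K := (cone_glue A C).

Lemma C0A s : s \in C0 C -> s \in A -> s \in C.
Proof. by rewrite /C0 in_setU1 => /orP[/eqP->|//]; rewrite (negbTE A0). Qed.
Lemma CC0 s : s \in C -> s \in C0 C.
Proof. by rewrite /C0 in_setU1 => ->; rewrite orbT. Qed.
Lemma CsA s : s \in C -> s \in A.
Proof. by move/(subsetP CA). Qed.

Lemma andb_perm a b c : [&& a && c, b & true] = [&& a, b & c].
Proof. by case: a; case: b; case: c. Qed.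

Lemma crit_lift s : s \in A -> critical K ext (lift_simplex s) =
  [&& [forall t in A, is_facet s t ==> (f s < f t)],
      [forall t in A, is_facet t s ==> (f t < f s)] &
      ~~ ((s \in C) && (g s <= f s))].
Proof.
move=> sA; rewrite /critical lift_cg // sA !cg_forall //=.
have E1 : [forall t in A, is_facet (lift_simplex s) (lift_simplex t) ==>
           (ext (lift_simplex s) < ext (lift_simplex t))] =
          [forall t in A, is_facet s t ==> (f s < f t)].
  by apply: eq_forallb => t; rewrite facet_lift !ext_lift.
have E2 : [forall t in A, is_facet (lift_simplex t) (lift_simplex s) ==>
           (ext (lift_simplex t) < ext (lift_simplex s))] =
          [forall t in A, is_facet t s ==> (f t < f s)].
  by apply: eq_forallb => t; rewrite facet_lift !ext_lift.
have E3 : [forall t in C0 C, is_facet (lift_simplex s) (cone_of t) ==>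
           (ext (lift_simplex s) < ext (cone_of t))] = ~~ ((s \in C) && (g s <= f s)).
  apply/forall_inP/idP => [H|H t tC].
    apply/negP => /andP[sC]; rewrite leNgt; move/negP; apply.
    by have := H s (CC0 sC); rewrite facet_lift_cone eqxx ext_lift ext_cone; apply.
  rewrite facet_lift_cone; apply/implyP => /eqP ts; subst t; rewrite ext_lift ext_cone.
  by move: H; rewrite (C0A tC sA) /= -ltNge.
have E4 : [forall t in C0 C, is_facet (cone_of t) (lift_simplex s) ==>
           (ext (cone_of t) < ext (lift_simplex s))] = true.
  by apply/forall_inP => t _; rewrite facet_cone_lift.
by rewrite E1 E2 E3 E4 andb_perm.
Qed.

Lemma crit_cone s : s \in C0 C -> critical K ext (cone_of s) =
  [&& [forall t in C0 C, is_facet s t ==> (g s < g t)],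
      [forall t in C0 C, is_facet t s ==> (g t < g s)] &
      ~~ ((s \in C) && (g s <= f s))].
Proof.
move=> sC; rewrite /critical cone_cg sC !cg_forall //=.
have E1 : [forall t in C0 C, is_facet (cone_of s) (cone_of t) ==>
           (ext (cone_of s) < ext (cone_of t))] =
          [forall t in C0 C, is_facet s t ==> (g s < g t)].
  by apply: eq_forallb => t; rewrite facet_cone !ext_cone.
have E2 : [forall t in C0 C, is_facet (cone_of t) (cone_of s) ==>
           (ext (cone_of t) < ext (cone_of s))] =
          [forall t in C0 C, is_facet t s ==> (g t < g s)].
  by apply: eq_forallb => t; rewrite facet_cone !ext_cone.
have E3 : [forall t in A, is_facet (lift_simplex t) (cone_of s) ==>
           (ext (lift_simplex t) < ext (cone_of s))] = ~~ ((s \in C) && (g s <= f s)).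
  apply/forall_inP/idP => [H|H t tA].
    apply/negP => /andP[sC']; rewrite leNgt; move/negP; apply.
    by have := H s (CsA sC'); rewrite facet_lift_cone eqxx ext_lift ext_cone; apply.
  rewrite facet_lift_cone; apply/implyP => /eqP ts; move: ts tA H => -> sA.
  by rewrite ext_lift ext_cone (C0A sC sA) /= -ltNge.
have E4 : [forall t in A, is_facet (cone_of s) (lift_simplex t) ==>
           (ext (cone_of s) < ext (lift_simplex t))] = true.
  by apply/forall_inP => t _; rewrite facet_cone_lift.
by rewrite E1 E2 E3 E4 /= (andbC (~~ _)).
Qed.

Lemma le1_eq (U : finType) (S : {set U}) x y : (#|S| <= 1)%N -> x \in S -> y \in S -> x = y.
Proof. by move/card_le1_eqP => H xS yS; apply: H. Qed.

Lemma in_exc (U : finType) (S : {set U}) (P Q : pred U) x :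
  (x \in [set t in S | P t & Q t]) = [&& x \in S, P x & Q x].
Proof. by rewrite inE. Qed.

Lemma dm_glue :
 (forall s, s \in A -> (#|[set t in A | is_facet s t & (f t <= f s)%R]| <= 1)%N /\
                       (#|[set t in A | is_facet t s & (f s <= f t)%R]| <= 1)%N) ->
 (forall s t, s \in C -> g s <= f s -> t \in A -> is_facet s t -> f s < f t) ->
 (forall s, s \in C0 C -> (#|[set t in C0 C | is_facet s t & (g t <= g s)%R]| <= 1)%N /\
                          (#|[set t in C0 C | is_facet t s & (g s <= g t)%R]| <= 1)%N) ->
 (forall s t, s \in C -> g s <= f s -> t \in C0 C -> is_facet t s -> g t < g s) ->
 discrete_morse K ext.
Proof.
move=> H1 H2 H3 H4 X; case/cg_cases => -[s sC ->].
- have [Hu Hd] := H1 s sC; split; apply/card_le1_eqP => Y Z; rewrite !in_exc.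
  + move=> /and3P[YK fY eY] /and3P[ZK fZ eZ].
    case: (cg_cases YK) fY eY => -[y yA ->]; case: (cg_cases ZK) fZ eZ => -[z zA ->];
      rewrite ?facet_lift ?facet_lift_cone ?ext_lift ?ext_cone.
    * move=> fz ez fy ey; congr lift_simplex; apply: (le1_eq Hu); by rewrite inE ?yA ?zA ?fy ?fz.
    * move=> /eqP zs ez fy ey; subst z; have sC' := C0A zA sC.
      by have := H2 _ _ sC' ez yA fy; rewrite ltNge ey.
    * move=> fz ez /eqP ys ey; subst y; have sC' := C0A yA sC.
      by have := H2 _ _ sC' ey zA fz; rewrite ltNge ez.
    * by move=> /eqP <- _ /eqP <-.
  + move=> /and3P[YK fY eY] /and3P[ZK fZ eZ].
    case: (cg_cases YK) fY eY => -[y yA ->]; case: (cg_cases ZK) fZ eZ => -[z zA ->];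
      rewrite ?facet_lift ?facet_cone_lift ?ext_lift ?ext_cone //.
    move=> fz ez fy ey; congr lift_simplex; apply: (le1_eq Hd); by rewrite inE ?yA ?zA ?fy ?fz.
- have [Hu Hd] := H3 s sC; split; apply/card_le1_eqP => Y Z; rewrite !in_exc.
  + move=> /and3P[YK fY eY] /and3P[ZK fZ eZ].
    case: (cg_cases YK) fY eY => -[y yA ->]; case: (cg_cases ZK) fZ eZ => -[z zA ->];
      rewrite ?facet_cone ?facet_cone_lift ?ext_cone //.
    move=> fz ez fy ey; congr cone_of; apply: (le1_eq Hu); by rewrite inE ?yA ?zA ?fy ?fz.
  + move=> /and3P[YK fY eY] /and3P[ZK fZ eZ].
    case: (cg_cases YK) fY eY => -[y yA ->]; case: (cg_cases ZK) fZ eZ => -[z zA ->];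
      rewrite ?facet_cone ?facet_lift_cone ?ext_lift ?ext_cone.
    * by move=> /eqP -> _ /eqP ->.
    * move=> fz ez /eqP ys ey; subst y; have sC' := C0A sC yA.
      by have := H4 _ _ sC' ey zA fz; rewrite ltNge ez.
    * move=> /eqP zs ez fy ey; subst z; have sC' := C0A sC zA.
      by have := H4 _ _ sC' ez yA fy; rewrite ltNge ey.
    * move=> fz ez fy ey; congr cone_of; apply: (le1_eq Hd); by rewrite inE ?yA ?zA ?fy ?fz.
Qed.

Lemma crit_in X : critical K ext X -> X \in K.
Proof. by case/and3P. Qed.

Lemma ncrit_glue p : ncrit K ext p =
  (#|[set s in A | critical K ext (lift_simplex s) & #|s| == p.+1]| +
   #|[set s in C0 C | critical K ext (cone_of s) & #|s| == p]|)%N.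
Proof.
rewrite /ncrit.
set SL := [set s in A | _ & _]; set SC := [set s in C0 C | _ & _].
have -> : [set X | critical K ext X & #|X| == p.+1] =
          (@lift_simplex T) @: SL :|: (@cone_of T) @: SC.
  apply/setP => X; rewrite in_setU in_set; apply/andP/orP.
    case=> cX; case: (cg_cases (crit_in cX)) => -[s sA E]; rewrite E in cX *.
      by rewrite card_lift => cs; left; apply: imset_f; rewrite /SL in_exc sA cX cs.
    by rewrite card_cone eqSS => cs; right; apply: imset_f; rewrite /SC in_exc sA cX cs.
  by case=> /imsetP[s]; rewrite ?/SL ?/SC in_exc => /and3P[_ cs ps] ->;
    rewrite ?card_lift ?card_cone.
rewrite cardsU.
have -> : (@lift_simplex T) @: SL :&: (@cone_of T) @: SC = set0.
  apply/setP => X; rewrite !inE; apply/negP => /andP[/imsetP[s _ ->] /imsetP[t _ /eqP]].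
  by rewrite (negbTE (lift_neq_cone _ _)).
by rewrite cards0 subn0 !card_imset //; [apply: cone_inj | apply: lift_inj].
Qed.

End Glue.

End Part2.
Import Part2.

Module Part3.
Set Implicit Arguments. Unset Strict Implicit. Unset Printing Implicit Defensive.
Import Order.TTheory GRing.Theory Num.Theory.
Local Open Scope ring_scope.

Lemma cx0 (T : finType) (K : {set {set T}}) : is_complex K -> set0 \notin K.
Proof. by case/andP. Qed.

Lemma cx_face (T : finType) (K : {set {set T}}) (s t : {set T}) :
  is_complex K -> s \in K -> t \subset s -> t != set0 -> t \in K.
Proof.
case/andP=> _ /forall_inP H sK ts t0.
by have := H s sK; move/forallP/(_ t); rewrite ts t0 /=; apply.
Qed.

Lemma facet_sub (T : finType) (s t : {set T}) : is_facet s t -> s \subset t.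
Proof. by case/andP. Qed.

Lemma facet_card (T : finType) (s t : {set T}) : is_facet s t -> #|t| = #|s|.+1.
Proof. by case/andP => _ /eqP. Qed.

Lemma in_grad (T : finType) (R : realFieldType) (K : {set {set T}}) (f : {set T} -> R) s t :
  ((s, t) \in gradient K f) = [&& s \in K, t \in K, is_facet s t & f t <= f s].
Proof. by rewrite inE. Qed.

Section Side.
Variables (T : finType) (R : realFieldType).
Variables (M A B C : {set {set T}}) (f : {set T} -> R).
Hypotheses (HM : is_complex M) (HA : is_subcomplex A M) (HB : is_subcomplex B M).
Hypotheses (HU : A :|: B = M) (HI : A :&: B = C) (Hdm : discrete_morse M f).

Lemma AM s : s \in A -> s \in M.
Proof. by case/andP: HA => _ /subsetP; apply. Qed.
Lemma CA : C \subset A.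
Proof. by rewrite -HI subsetIl. Qed.
Lemma CB : C \subset B.
Proof. by rewrite -HI subsetIr. Qed.
Lemma A0 : set0 \notin A.
Proof. by case/andP: HA => /cx0. Qed.
Lemma inC s : s \in A -> s \in B -> s \in C.
Proof. by rewrite -HI inE => -> ->. Qed.

Lemma nonempty s : s \in M -> s != set0.
Proof. by apply: contraTneq => ->; apply: cx0. Qed.

Lemma faceA s t : s \in A -> t \in M -> is_facet t s -> t \in A.
Proof.
move=> sA tM /facet_sub ts; case/andP: HA => cA _.
exact: (cx_face cA sA ts (nonempty tM)).
Qed.

Lemma cofaceA s t : s \in A -> s \notin C -> t \in M -> s \subset t -> t \in A.
Proof.
move=> sA sC; rewrite -HU inE => /orP[//|tB] st.
case/andP: HB => cB _; have sB := cx_face cB tB st (nonempty (AM sA)).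
by rewrite (inC sA sB) in sC.
Qed.

Lemma dmA s : s \in A ->
  (#|[set t in A | is_facet s t & (f t <= f s)%R]| <= 1)%N /\
  (#|[set t in A | is_facet t s & (f s <= f t)%R]| <= 1)%N.
Proof.
move=> sA; have [H1 H2] := Hdm (AM sA); split.
  apply: leq_trans H1; apply: subset_leq_card; apply/subsetP => t.
  by rewrite !in_exc => /and3P[/AM -> -> ->].
apply: leq_trans H2; apply: subset_leq_card; apply/subsetP => t.
by rewrite !in_exc => /and3P[/AM -> -> ->].
Qed.

Lemma critA s : s \in A -> s \notin C -> critical M f s =
  [forall t in A, is_facet s t ==> (f s < f t)] &&
  [forall t in A, is_facet t s ==> (f t < f s)].
Proof.
move=> sA sC; rewrite /critical (AM sA) /=; congr andb.
  apply/forall_inP/forall_inP => H t tK; first exact: H (AM tK).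
  by apply/implyP => ft; apply: (implyP (H t (cofaceA sA sC tK (facet_sub ft)))).
apply/forall_inP/forall_inP => H t tK; first exact: H (AM tK).
by apply/implyP => ft; apply: (implyP (H t (faceA sA tK ft))).
Qed.

Lemma noncritA s t : s \in A -> t \in A ->
  ((s, t) \in gradient M f) || ((t, s) \in gradient M f) ->
  ~~ ([forall t in A, is_facet s t ==> (f s < f t)] &&
      [forall t in A, is_facet t s ==> (f t < f s)]).
Proof.
move=> sA tA; rewrite !in_grad => /orP[]/and4P[_ _ ft le];
  apply/negP => /andP[/forall_inP H1 /forall_inP H2].
  by have := implyP (H1 t tA) ft; rewrite ltNge le.
by have := implyP (H2 t tA) ft; rewrite ltNge le.
Qed.

End Side.

End Part3.
Import Part3.

Module Part4.
Set Implicit Arguments. Unset Strict Implicit. Unset Printing Implicit Defensive.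
Import Order.TTheory GRing.Theory Num.Theory.
Local Open Scope ring_scope.

Lemma grad_glue (T : finType) (R : realFieldType) (M A C : {set {set T}})
  (f g : {set T} -> R) s t :
  set0 \notin A -> (s, t) \in gradient M f -> s \in A -> t \in A ->
  (lift_simplex s, lift_simplex t) \in gradient (cone_glue A C) (ext f g).
Proof.
move=> A0; rewrite !in_grad => /and4P[_ _ ft le] sA tA.
by rewrite !lift_cg // sA tA facet_lift !ext_lift ft le.
Qed.

Lemma inC0 (T : finType) (C : {set {set T}}) s : (s \in C0 C) = (s == set0) || (s \in C).
Proof. by rewrite /C0 in_setU1. Qed.

Lemma facet0 (T : finType) (t : {set T}) : is_facet t set0 = false.
Proof. by rewrite /is_facet cards0 andbF. Qed.

Lemma facet0l (T : finType) (t : {set T}) : is_facet set0 t -> t != set0.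
Proof. by move/facet_card; rewrite cards0 => H; apply/eqP => t0; rewrite t0 cards0 in H. Qed.

Section Side2.
Variables (T : finType) (R : realFieldType).
Variables (M A B C : {set {set T}}) (f : {set T} -> R).
Hypotheses (HM : is_complex M) (HA : is_subcomplex A M) (HB : is_subcomplex B M).
Hypotheses (HU : A :|: B = M) (HI : A :&: B = C) (Hdm : discrete_morse M f).
Hypothesis HCc : is_complex C.
Hypothesis Hpart : forall s, s \in C -> exists2 t, t \in B &
     ((s, t) \in gradient M f) || ((t, s) \in gradient M f).

Definition typeA s := [exists t in C, ((s, t) \in gradient M f) || ((t, s) \in gradient M f)].

Definition eps : R := \big[Order.min/1]_(p : {set T} * {set T} | f p.1 < f p.2) ((f p.2 - f p.1) / 3%:R).

Lemma eps_gt0 : 0 < eps.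
Proof. apply: lt_bigmin => // -[s t] /= H; apply: divr_gt0 => //; by rewrite subr_gt0. Qed.

Lemma eps_le s t : f s < f t -> eps <= (f t - f s) / 3%:R.
Proof. by move=> H; apply: (bigmin_le_cond _ (j := (s, t))). Qed.

Definition Lb : R := - (\sum_(s in C) `|f s|) - 1 - eps.

Definition g2 s : R := if s == set0 then Lb else f s + (if typeA s then eps else - eps).

Lemma g2_bnd s : s != set0 -> f s - eps <= g2 s <= f s + eps.
Proof.
move=> /negbTE s0; rewrite /g2 s0; have e0 := eps_gt0.
by case: (typeA s); apply/andP; split; lra.
Qed.

Lemma g2_lt s t : s != set0 -> t != set0 -> f s < f t -> g2 s < g2 t.
Proof.
move=> s0 t0 lt; have := eps_le lt; have /andP[_ h1] := g2_bnd s0.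
have /andP[h2 _] := g2_bnd t0; have e0 := eps_gt0.
rewrite ler_pdivlMr ?ltr0n //; lra.
Qed.

Lemma g2_le s t : s != set0 -> t != set0 -> g2 t <= g2 s -> f t <= f s.
Proof. by move=> s0 t0; apply: contraTT; rewrite -!ltNge; apply: g2_lt. Qed.

Lemma Lb_lt s : s \in C -> Lb < g2 s.
Proof.
move=> sC; have s0 : s != set0 by apply: contraTneq sC => ->; apply: cx0.
have /andP[h _] := g2_bnd s0; have e0 := eps_gt0.
have : `|f s| <= \sum_(s in C) `|f s|.
  by rewrite (bigD1 s) //= lerDl; apply: sumr_ge0 => i _.
rewrite /Lb; have := ler_norm (- f s); rewrite normrN; lra.
Qed.

Lemma g2_typeA s : s != set0 -> g2 s <= f s -> ~~ typeA s.
Proof.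
move=> /negbTE s0; rewrite /g2 s0; have e0 := eps_gt0.
by case: (typeA s) => //; lra.
Qed.

Lemma g2_A s : s != set0 -> typeA s -> g2 s = f s + eps.
Proof. by move=> /negbTE s0 H; rewrite /g2 s0 H. Qed.

Lemma g2_B s : s != set0 -> ~~ typeA s -> g2 s <= f s.
Proof. by move=> /negbTE s0 /negbTE H; rewrite /g2 s0 H; have e0 := eps_gt0; lra. Qed.

Lemma CM s : s \in C -> s \in M.
Proof. by move=> sC; apply: (AM HA); apply: (subsetP (CA HI)). Qed.
Lemma C_ne0 s : s \in C -> s != set0.
Proof. by move=> sC; apply: (nonempty HM (CM sC)). Qed.

Lemma typeb_up s : s \in C -> ~~ typeA s ->
  exists2 t0, t0 \in B & (t0 \notin C) && ((s, t0) \in gradient M f).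
Proof.
move=> sC nA; have [t tB rel] := Hpart sC.
have tC : t \notin C.
  by apply: contra nA => tC; apply/existsP; exists t; rewrite tC rel.
exists t => //; rewrite tC /=; case/orP: rel => // /[dup] H.
rewrite in_grad => /and4P[tM _ ft _].
by have := cx_face HCc sC (facet_sub ft) (nonempty HM tM); rewrite (negbTE tC).
Qed.

Lemma typeb_noA s t : s \in C -> ~~ typeA s -> t \in A -> is_facet s t -> f s < f t.
Proof.
move=> sC nA tA ft; rewrite ltNge; apply/negP => le.
have [t0 t0B /andP[t0C]] := typeb_up sC nA; rewrite in_grad => /and4P[_ t0M ft0 le0].
have [H _] := Hdm (CM sC).
have E : t0 = t by apply: (le1_eq H); rewrite in_exc ?t0M ?ft0 ?le0 ?(AM HA tA) ?ft ?le.
by subst t0; rewrite (inC HI tA t0B) in t0C.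
Qed.

Local Notation K := (cone_glue A C).
Local Notation F := (ext f g2).

Lemma facet_ne0 (s t : {set T}) : is_facet s t -> t != set0.
Proof. by move/facet_card => H; apply/eqP => t0; rewrite t0 cards0 in H. Qed.

Lemma g2_0 : g2 set0 = Lb.
Proof. by rewrite /g2 eqxx. Qed.

Lemma dm2 : discrete_morse K F.
Proof.
apply: (@dm_glue T R A C f g2).
- exact: (A0 HA).
- exact: (dmA HA Hdm).
- move=> s t sC le tA ft; apply: typeb_noA => //.
  by apply: g2_typeA => //; apply: C_ne0.
- move=> s; rewrite inC0 => /orP[/eqP->|sC]; split.
  + apply/card_le1_eqP => x y; rewrite !in_exc => /and3P[xC fx lx].
    have x0 := facet_ne0 fx; move: xC; rewrite inC0 (negbTE x0) /= => xC.
    by move: lx; rewrite g2_0 leNgt (Lb_lt xC).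
  + by apply/card_le1_eqP => x y; rewrite !in_exc facet0 andbF.
  + have [H _] := Hdm (CM sC); apply: leq_trans H; apply: subset_leq_card.
    apply/subsetP => t; rewrite !in_exc => /and3P[tC ft le].
    have tn0 := facet_ne0 ft; move: tC; rewrite inC0 (negbTE tn0) /= => tC.
    by rewrite (CM tC) ft (g2_le (C_ne0 sC) tn0 le).
  + have [_ H] := Hdm (CM sC); apply: leq_trans H; apply: subset_leq_card.
    apply/subsetP => t; rewrite !in_exc => /and3P[tC ft le].
    move: tC; rewrite inC0 => /orP[/eqP t0|tC].
      by move: le; rewrite t0 g2_0 leNgt Lb_lt.
    by rewrite (CM tC) ft (g2_le (C_ne0 tC) (C_ne0 sC) le).
- move=> s t sC le; rewrite inC0 => /orP[/eqP ->|tC] ft; first by rewrite g2_0 Lb_lt.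
  case: (ltP (f t) (f s)) => [lt|ge]; first exact: g2_lt (C_ne0 tC) (C_ne0 sC) lt.
  have : typeA s.
    apply/existsP; exists t; rewrite tC /= !in_grad (CM tC) (CM sC) ft ge.
    by rewrite orbT.
  by rewrite (negbTE (g2_typeA (C_ne0 sC) le)).
Qed.

Lemma critL2 s : s \in A -> critical K F (lift_simplex s) = (s \notin C) && critical M f s.
Proof.
move=> sA; rewrite (crit_lift C f g2 (A0 HA) sA).
case sC: (s \in C) => /=.
  case tA: (typeA s).
    case/existsP: tA => t /andP[tC rel].
    by rewrite andbA (negbTE (noncritA sA (subsetP (CA HI) _ tC) rel)).
  by rewrite (g2_B (C_ne0 sC)) ?tA // !andbF.
by rewrite (critA f HM HA HB HU HI sA) ?sC // andbT.
Qed.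

Lemma critC2 s : s \in C0 C -> critical K F (cone_of s) = (s == set0).
Proof.
move=> sC0; rewrite (crit_cone f g2 (A0 HA) (CA HI) sC0).
move: sC0; rewrite inC0 => /orP[/eqP->|sC].
  rewrite eqxx; apply/and3P; split.
  - apply/forall_inP => t tC; apply/implyP => ft.
    move: tC; rewrite inC0 (negbTE (facet_ne0 ft)) /= => tC.
    by rewrite g2_0 Lb_lt.
  - by apply/forall_inP => t _; rewrite facet0.
  - by rewrite (negbTE (cx0 HCc)).
rewrite (negbTE (C_ne0 sC)); apply/negP => /and3P[/forall_inP Hu /forall_inP Hd].
case tA: (typeA s); last by rewrite sC (g2_B (C_ne0 sC)) ?tA.
move=> _; case/existsP: tA => t /andP[tC] /orP[] /[dup] rel.
  rewrite in_grad => /and4P[_ _ ft le].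
  have tA : typeA t by apply/existsP; exists s; rewrite sC rel orbT.
  have := implyP (Hu t (CC0 tC)) ft.
  rewrite (g2_A (C_ne0 sC)) ?(g2_A (C_ne0 tC)) //; first by rewrite ltrD2r ltNge le.
  by apply/existsP; exists t; rewrite tC rel.
rewrite in_grad => /and4P[_ _ ft le].
have tA : typeA t by apply/existsP; exists s; rewrite sC rel.
have := implyP (Hd t (CC0 tC)) ft.
rewrite (g2_A (C_ne0 sC)) ?(g2_A (C_ne0 tC)) //; first by rewrite ltrD2r ltNge le.
by apply/existsP; exists t; rewrite tC rel orbT.
Qed.

Lemma cardC0_crit p : #|[set s in C0 C | critical K F (cone_of s) & #|s| == p]| = (p == 0)%N.
Proof.
case: p => [|p] /=.
  have -> : [set s in C0 C | critical K F (cone_of s) & #|s| == 0%N] = [set set0].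
    apply/setP => s; rewrite in_exc inE.
    apply/idP/idP => [/and3P[sC c _]|/eqP->]; first by rewrite -(critC2 sC).
    by rewrite inC0 eqxx /= critC2 ?inC0 ?eqxx // cards0.
  by rewrite cards1.
apply/eqP; rewrite cards_eq0; apply/eqP/setP => s; rewrite in_exc in_set0.
apply/negP => /and3P[sC]; rewrite critC2 // => /eqP->; by rewrite cards0.
Qed.

Lemma side2_perfect (gg : nat) :
 (forall s, critical M f s -> #|s| = 1%N -> s \in B) ->
 #|[set s in A :\: C | critical M f s & #|s| == 2%N]| = (2 * gg)%N ->
 (forall s, critical M f s -> #|s| = 3%N -> s \in A :\: C) ->
 ncrit M f 2 = 1%N ->
 perfect_surface K gg F.
Proof.
move=> Hv He Ht Hn; split; first exact: dm2.
- rewrite ncrit_glue cardC0_crit /= addn1; apply/eqP; rewrite eqSS cards_eq0.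
  apply/eqP/setP => s; rewrite in_exc in_set0; apply/negP => /and3P[sA].
  rewrite critL2 // => /andP[sC cM] /eqP s1.
  by rewrite (inC HI sA (Hv _ cM s1)) in sC.
- rewrite ncrit_glue cardC0_crit /= addn0 -He; congr (#|pred_of_set _|).
  apply/setP => s; rewrite !in_exc in_setD.
  apply/and3P/and3P => [[sA]|[/andP[sC sA]]]; first by rewrite critL2 // => /andP[-> ->] ->.
  by move=> c ->; rewrite critL2 // sC c.
- rewrite ncrit_glue cardC0_crit /= addn0 -[RHS]Hn /ncrit; congr (#|pred_of_set _|).
  apply/setP => s; rewrite in_exc in_set.
  apply/and3P/andP => [[sA]|[c /eqP s3]]; first by rewrite critL2 // => /andP[_ ->] ->.
  have := Ht _ c s3; rewrite in_setD => /andP[sC sA].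
  by rewrite sA critL2 // sC c s3.
Qed.

End Side2.

Lemma side2 (T : finType) (R : realFieldType) (M A B C : {set {set T}}) (f : {set T} -> R) (gg : nat) :
  is_complex M -> is_subcomplex A M -> is_subcomplex B M ->
  A :|: B = M -> A :&: B = C -> discrete_morse M f -> is_complex C ->
  (forall s, s \in C -> exists2 t, t \in B &
     ((s, t) \in gradient M f) || ((t, s) \in gradient M f)) ->
  (forall s, critical M f s -> #|s| = 1%N -> s \in B) ->
  #|[set s in A :\: C | critical M f s & #|s| == 2%N]| = (2 * gg)%N ->
  (forall s, critical M f s -> #|s| = 3%N -> s \in A :\: C) ->
  ncrit M f 2 = 1%N ->
  exists f2 : {set option T} -> R,
   [/\ perfect_surface (cone_glue A C) gg f2,
       (forall s, s \in A -> f2 (lift_simplex s) = f s)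
     & (forall s t, (s, t) \in gradient M f -> s \in A -> t \in A ->
           (lift_simplex s, lift_simplex t) \in gradient (cone_glue A C) f2)].
Proof.
move=> HM HA HB HU HI Hdm HCc Hpart Hv He Ht Hn.
exists (ext f (g2 M C f)); split.
- exact: (side2_perfect HM HA HB HU HI Hdm HCc Hpart Hv He Ht Hn).
- by move=> s _; rewrite ext_lift.
- by move=> s t; apply: grad_glue; apply: (A0 HA).
Qed.

End Part4.
Import Part4.

Module Part5.
Set Implicit Arguments. Unset Strict Implicit. Unset Printing Implicit Defensive.
Import Order.TTheory GRing.Theory Num.Theory.

Section BFS.
Variables (T : finType) (C : {set {set T}}) (r : T).

Fixpoint reach n : {set T} :=
  if n is n'.+1 then reach n' :|: [set v | [exists u in reach n', adj C u v]] else [set r].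

Lemma reach_path p x n : x \in reach n -> path (adj C) x p -> last x p \in reach (n + size p).
Proof.
elim: p x n => [|y p IH] x n /=; first by rewrite addn0.
move=> xr /andP[xy py]; rewrite addnS -addSn; apply: IH py.
by rewrite /= inE; apply/orP; right; rewrite inE; apply/existsP; exists x; rewrite xr.
Qed.

Hypotheses (HC : is_complex C) (rC : [set r] \in C) (Hcon : connected_cx C).

Lemma exR v : exists n, (v \in reach n) || ([set v] \notin C).
Proof.
case vC: ([set v] \in C); last by exists 0%N; rewrite orbT.
have /connectP[p pP ->] := Hcon rC vC.
by exists (0 + size p)%N; rewrite (reach_path _ pP) // inE.
Qed.

Definition dist v := ex_minn (exR v).

Lemma distP v : (v \in reach (dist v)) || ([set v] \notin C).
Proof. by rewrite /dist; case: ex_minnP. Qed.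

Lemma dist_min v n : (v \in reach n) || ([set v] \notin C) -> (dist v <= n)%N.
Proof. by move=> Hn; rewrite /dist; case: (ex_minnP (exR v)) => m _; apply. Qed.

Lemma dist_r : dist r = 0%N.
Proof. by apply/eqP; rewrite -leqn0; apply: dist_min; rewrite /= inE eqxx. Qed.

Lemma vert_adj u v : adj C u v -> [set u] \in C.
Proof.
case/andP => _ uv; apply: (cx_face HC uv); first by rewrite sub1set !inE eqxx.
by apply/eqP => /setP/(_ u); rewrite !inE eqxx.
Qed.

Lemma dist_par v : [set v] \in C -> v != r -> exists u, adj C u v && ((dist u).+1 == dist v).
Proof.
move=> vC vr; have := distP v; rewrite vC orbF.
case Ed: (dist v) => [|k]; first by rewrite inE => /eqP vr'; rewrite vr' eqxx in vr.
rewrite /= inE => /orP[vk|].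
  by have := dist_min (n := k) (v := v); rewrite vk => /(_ isT); rewrite Ed ltnn.
rewrite inE => /existsP[u /andP[uk uv]]; exists u; rewrite uv /=.
have Hu : (dist u <= k)%N by apply: dist_min; rewrite uk.
have uC := vert_adj uv.
have := distP u; rewrite uC orbF => ud.
have : (dist v <= (dist u).+1)%N.
  apply: dist_min; rewrite /= !inE; apply/orP; left; apply/orP; right.
  by apply/existsP; exists u; rewrite ud.
rewrite Ed ltnS => H; by rewrite eqSS eqn_leq Hu H.
Qed.

Definition par v := odflt v [pick u | adj C u v && ((dist u).+1 == dist v)].

Lemma parP v : [set v] \in C -> v != r ->
  [/\ [set par v; v] \in C, par v != v & (dist (par v)).+1 = dist v].
Proof.
move=> vC vr; rewrite /par; case: pickP => [u /andP[/andP[uv uvC] /eqP]|H] /=.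
  by move=> ->; split.
by have [u] := dist_par vC vr; rewrite H.
Qed.

End BFS.

Lemma card_sum (U : finType) (A : {set U}) (P : pred U) :
  #|[set x in A | P x]| = \sum_(x in A) (P x : nat).
Proof.
rewrite -sum1_card big_mkcond /= [RHS]big_mkcond /=; apply: eq_bigr => x _.
by rewrite !inE; case: (x \in A); case: (P x).
Qed.

Definition verts (T : finType) (C : {set {set T}}) := [set v | [set v] \in C].

Lemma handshake (T : finType) (C : {set {set T}}) :
  is_complex C ->
  (forall v, [set v] \in C -> #|[set e in cells C 1 | v \in e]| = 2) ->
  #|cells C 1| = #|verts C|.
Proof.
move=> HC Hdeg.
have E1 : (\sum_(v in verts C) #|[set e in cells C 1 | v \in e]| = 2 * #|verts C|)%N.
  rewrite -sum1_card big_distrr /= muln1; apply: eq_bigr => v.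
  by rewrite inE => /Hdeg.
have E2 : (\sum_(e in cells C 1) #|[set v in verts C | v \in e]| = 2 * #|cells C 1|)%N.
  rewrite -sum1_card big_distrr /= muln1; apply: eq_bigr => e.
  rewrite inE => /andP[eC /eqP e2]; rewrite -e2; congr (#|pred_of_set _|).
  apply/setP => v; rewrite !inE andb_idl // => ve.
  apply: (cx_face HC eC); first by rewrite sub1set.
  by apply/eqP => /setP/(_ v); rewrite !inE eqxx.
have : (2 * #|verts C| = 2 * #|cells C 1|)%N.
  rewrite -E1 -E2; under eq_bigr do rewrite card_sum.
  rewrite exchange_big /=; apply: eq_bigr => e _; by rewrite card_sum.
by move/eqP; rewrite eqn_mul2l /= => /eqP.
Qed.

End Part5.
Import Part5.

Module Part6.
Set Implicit Arguments. Unset Strict Implicit. Unset Printing Implicit Defensive.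
Import Order.TTheory GRing.Theory Num.Theory.
Local Open Scope ring_scope.

Lemma ar0 a : (2 * a + 1 <= 1)%N -> (0 < a)%N -> False. Proof. lia. Qed.
Lemma ar1 a b : (2 * a + 1 <= 2 * b + 1)%N -> b.+1 = a -> False. Proof. lia. Qed.
Lemma ar2 a b : (a <= b)%N -> (2 * b + 2 <= 2 * a + 1)%N -> False. Proof. lia. Qed.
Lemma ar3 a b : (a <= b)%N -> (2 * a + 1 < 2 * b + 2)%N. Proof. lia. Qed.
Lemma ar4 a b : b.+1 = a -> maxn b a = a. Proof. lia. Qed.
Lemma ar5 a b : a.+1 = b -> b.+1 = a -> False. Proof. lia. Qed.

Section Side1.
Variables (T : finType) (R : realFieldType).
Variables (M A B C : {set {set T}}) (f : {set T} -> R) (r : T).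
Hypotheses (HM : is_complex M) (HA : is_subcomplex A M) (HB : is_subcomplex B M).
Hypotheses (HU : A :|: B = M) (HI : A :&: B = C) (Hdm : discrete_morse M f).
Hypotheses (HCc : is_complex C) (HC2 : forall s, s \in C -> (#|s| <= 2)%N).
Hypothesis Hdeg : forall v, [set v] \in C -> #|[set e in cells C 1 | v \in e]| = 2%N.
Hypothesis Hcon : connected_cx C.
Hypothesis rC : [set r] \in C.
Hypothesis Hpart : forall s, s \in C -> exists2 t, t \in A &
     ((s, t) \in gradient M f) || ((t, s) \in gradient M f).

Local Notation d := (dist rC Hcon).
Local Notation p := (par rC Hcon).
Local Notation V := (verts C).

Lemma inV v : (v \in V) = ([set v] \in C).
Proof. by rewrite inE. Qed.

Lemma inVr x : x \in V :\ r -> [set x] \in C /\ x != r.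
Proof. by rewrite !inE => /andP[-> ->]. Qed.

Lemma d_pos v : [set v] \in C -> v != r -> (0 < d v)%N.
Proof. by move=> vC vr; have [_ _ <-] := parP HCc rC Hcon vC vr. Qed.

Definition pe x := [set p x; x].
Definition Pe := [set pe x | x in V :\ r].
Definition dS (s : {set T}) := (\max_(x in s) d x)%N.
Definition hn (s : {set T}) := (2 * dS s + (if (#|s| == 2) && (s \notin Pe) then 2 else 1))%N.
Definition Kc : R := 1 + \sum_(s in C) `|f s|.
Definition h (s : {set T}) : R := Kc + (hn s)%:R.

Lemma pe_C x : x \in V :\ r -> pe x \in C.
Proof. by case/inVr => xC xr; have [] := parP HCc rC Hcon xC xr. Qed.

Lemma pe_card x : x \in V :\ r -> #|pe x| = 2%N.
Proof. by case/inVr => xC xr; have [_ px _] := parP HCc rC Hcon xC xr; rewrite cards2 px. Qed.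

Lemma pe_d x : x \in V :\ r -> (d (p x)).+1 = d x.
Proof. by case/inVr => xC xr; have [] := parP HCc rC Hcon xC xr. Qed.

Lemma dS1 v : dS [set v] = d v.
Proof. by rewrite /dS big_set1. Qed.
Lemma dS0 : dS set0 = 0%N.
Proof. by rewrite /dS big_set0. Qed.
Lemma dS_ge (s : {set T}) u : u \in s -> (d u <= dS s)%N.
Proof. by move=> us; apply: (leq_bigmax_cond (P := mem s)). Qed.

Lemma dS_pe x : x \in V :\ r -> dS (pe x) = d x.
Proof.
move=> xV; have px : p x != x by case/inVr: xV => xC xr; have [] := parP HCc rC Hcon xC xr.
rewrite /dS /pe big_setU1 ?inE // big_set1 /=.
exact: ar4 (pe_d xV).
Qed.

Lemma Pe_inv (e : {set T}) : e \in Pe -> exists2 x, x \in V :\ r & e = pe x.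
Proof. by case/imsetP => x xV ->; exists x. Qed.

Lemma pe_mem u x : u \in pe x -> u = p x \/ u = x.
Proof. by move/set2P. Qed.

Lemma pe_inj : {in V :\ r &, injective pe}.
Proof.
move=> x y xV yV E; have := pe_mem (u := x) (x := y); rewrite -E /pe !inE eqxx orbT.
case=> // xpy; have := pe_mem (u := y) (x := x); rewrite E /pe !inE eqxx orbT.
case=> // ypx; have := pe_d xV; have := pe_d yV; rewrite -xpy -ypx => h1 h2; case: (ar5 h1 h2).
Qed.

Lemma hn_pe x : x \in V :\ r -> hn (pe x) = (2 * d x + 1)%N.
Proof. by move=> xV; rewrite /hn dS_pe // imset_f // andbF. Qed.
Lemma hn1 v : hn [set v] = (2 * d v + 1)%N.
Proof. by rewrite /hn dS1 cards1. Qed.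
Lemma hn0 : hn set0 = 1%N.
Proof. by rewrite /hn dS0 cards0. Qed.
Lemma hn_np (e : {set T}) : #|e| = 2%N -> e \notin Pe -> hn e = (2 * dS e + 2)%N.
Proof. by move=> e2 eP; rewrite /hn e2 eP. Qed.

Lemma h_le s t : (h t <= h s) = (hn t <= hn s)%N.
Proof. by rewrite /h lerD2l ler_nat. Qed.
Lemma h_lt s t : (h t < h s) = (hn t < hn s)%N.
Proof. by rewrite /h ltrD2l ltr_nat. Qed.

Lemma f_lt_h s : s \in C -> f s < h s.
Proof.
move=> sC; have : `|f s| <= \sum_(s in C) `|f s|.
  by rewrite (bigD1 s) //= lerDl; apply: sumr_ge0 => i _.
have := ler_norm (f s); have : 0 <= (hn s)%:R :> R by rewrite ler0n.
rewrite /h /Kc; lra.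
Qed.

Lemma h_nle s : s \in C -> (h s <= f s) = false.
Proof. by move=> sC; rewrite leNgt f_lt_h. Qed.

Lemma le1_const (U : finType) (S : {set U}) w : (forall t, t \in S -> t = w) -> (#|S| <= 1)%N.
Proof.
move=> H; rewrite -(cards1 w); apply: subset_leq_card; apply/subsetP => t /H ->.
by rewrite inE.
Qed.

Lemma shapeC0 s : s \in C0 C ->
  [\/ s = set0, exists2 v, s = [set v] & [set v] \in C | (#|s| = 2%N /\ s \in C)].
Proof.
rewrite inC0 => /orP[/eqP->|sC]; first by constructor 1.
have := HC2 sC; have s0 : s != set0 by apply: contraTneq sC => ->; apply: cx0.
rewrite leq_eqVlt ltnS leq_eqVlt ltnS leqn0 cards_eq0 (negbTE s0) orbF.
case/orP => [/eqP s2|/cards1P[v sv]]; first by constructor 3.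
by constructor 2; exists v => //; rewrite -sv.
Qed.

Lemma facet_from0 (t : {set T}) : is_facet set0 t -> exists v, t = [set v].
Proof. by move/facet_card; rewrite cards0 => /eqP/cards1P. Qed.

Lemma facet_to1 (t : {set T}) v : is_facet t [set v] -> t = set0.
Proof. by move/facet_card; rewrite cards1 => -[] /esym/eqP; rewrite cards_eq0 => /eqP. Qed.

Lemma facet_to2 (t e : {set T}) : #|e| = 2%N -> is_facet t e -> exists2 u, u \in e & t = [set u].
Proof.
move=> e2 ft; have := facet_card ft; rewrite e2 => -[] /esym/eqP/cards1P[u tu].
exists u => //; move: (facet_sub ft); rewrite tu sub1set //.
Qed.

Lemma facet_from1 v (t : {set T}) : is_facet [set v] t -> v \in t /\ #|t| = 2%N.
Proof.
move=> ft; split; first by rewrite -sub1set (facet_sub ft).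
by rewrite (facet_card ft) cards1.
Qed.

Lemma facet_from2 (s t : {set T}) : #|s| = 2%N -> t \in C0 C -> is_facet s t -> False.
Proof.
move=> s2 tC ft; have t3 := facet_card ft; rewrite s2 in t3.
move: tC; rewrite inC0 => /orP[/eqP t0|tC]; first by rewrite t0 cards0 in t3.
by have := HC2 tC; rewrite t3.
Qed.

Lemma C0_C (t : {set T}) : t \in C0 C -> t != set0 -> t \in C.
Proof. by rewrite inC0 => /orP[->|]. Qed.

Lemma dm1_up s : s \in C0 C -> (#|[set t in C0 C | is_facet s t & (h t <= h s)%R]| <= 1)%N.
Proof.
case/shapeC0 => [->|[v -> vC]|[s2 sC]].
- apply: (le1_const (w := [set r])) => t; rewrite in_exc => /and3P[tC ft].
  have [v tv] := facet_from0 ft; rewrite tv h_le hn1 hn0 => le.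
  case: (v =P r) => [->//|/eqP vr].
  have tC' := C0_C tC (facet_ne0 ft); rewrite tv in tC'.
  by case: (ar0 le (d_pos tC' vr)).
- apply: (le1_const (w := pe v)) => t; rewrite in_exc => /and3P[tC ft].
  have [vt t2] := facet_from1 ft; have tC' := C0_C tC (facet_ne0 ft).
  rewrite h_le hn1; case tP: (t \in Pe).
    have [x xV tx] := Pe_inv tP; rewrite tx hn_pe // => le.
    rewrite tx in vt; case: (pe_mem vt) => [vpx|->//].
    by case: (ar1 le); rewrite vpx pe_d.
  by rewrite hn_np ?tP // => le; case: (ar2 (dS_ge vt) le).
- apply: (le1_const (w := set0)) => t; rewrite in_exc => /and3P[tC ft].
  by case: (facet_from2 s2 tC ft).
Qed.

Lemma dm1_dn s : s \in C0 C -> (#|[set t in C0 C | is_facet t s & (h s <= h t)%R]| <= 1)%N.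
Proof.
case/shapeC0 => [->|[v -> vC]|[s2 sC]].
- apply: (le1_const (w := set0)) => t; rewrite in_exc => /and3P[tC].
  by rewrite facet0.
- apply: (le1_const (w := set0)) => t; rewrite in_exc => /and3P[tC /facet_to1].
  by [].
- case sP: (s \in Pe).
    have [x xV sx] := Pe_inv sP.
    apply: (le1_const (w := [set x])) => t; rewrite in_exc => /and3P[tC ft].
    have [u us tu] := facet_to2 s2 ft; rewrite tu h_le hn1 sx hn_pe // => le.
    rewrite sx in us; case: (pe_mem us) => [upx|->//].
    by case: (ar1 le); rewrite upx pe_d.
  apply: (le1_const (w := set0)) => t; rewrite in_exc => /and3P[tC ft].
  have [u us tu] := facet_to2 s2 ft; rewrite tu h_le hn1 hn_np ?sP //.
  have := dS_ge us; lia.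
Qed.

Local Notation K := (cone_glue A C).
Local Notation F := (ext f h).

Lemma critC1 s : s \in C0 C -> critical K F (cone_of s) = (#|s| == 2%N) && (s \notin Pe).
Proof.
move=> sC0; rewrite (crit_cone f h (A0 HA) (CA HI) sC0).
case/shapeC0: sC0 => [->|[v -> vC]|[s2 sC]].
- rewrite cards0 /=; apply/negP => /and3P[/forall_inP Hu _ _].
  have := Hu [set r] (CC0 rC); rewrite /is_facet sub0set cards0 cards1 /=.
  by rewrite h_lt hn1 hn0 dist_r.
- rewrite cards1 /=; apply/negP => /and3P[/forall_inP Hu /forall_inP Hd _].
  case: (v =P r) => [vr|/eqP vr].
    have := Hd set0; rewrite inC0 eqxx /is_facet sub0set cards0 cards1 /= => /(_ isT).
    by rewrite h_lt hn1 hn0 vr dist_r.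
  have vV : v \in V :\ r by rewrite !inE vr vC.
  have := Hu (pe v) (CC0 (pe_C vV)); rewrite /is_facet sub1set /pe !inE eqxx orbT.
  by rewrite -/(pe v) pe_card // cards1 /= h_lt hn1 hn_pe // ltnn.
- rewrite s2 eqxx /=; case sP: (s \in Pe) => /=.
    apply/negP => /and3P[_ /forall_inP Hd _].
    have [x xV sx] := Pe_inv sP.
    have xC : [set x] \in C by case/inVr: xV.
    have := Hd [set x] (CC0 xC); rewrite /is_facet cards1 s2 eqxx andbT sx sub1set /pe !inE eqxx orbT /=.
    by rewrite -/(pe x) h_lt hn1 hn_pe // ltnn.
  apply/and3P; split.
  + by apply/forall_inP => t tC; apply/implyP => ft; case: (facet_from2 s2 tC ft).
  + apply/forall_inP => t tC; apply/implyP => ft.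
    have [u us tu] := facet_to2 s2 ft; rewrite tu h_lt hn1 hn_np ?sP //.
    exact: ar3 (dS_ge us).
  + by rewrite sC h_nle.
Qed.

Lemma dm1 : discrete_morse K F.
Proof.
apply: (@dm_glue T R A C f h).
- exact: (A0 HA).
- exact: (dmA HA Hdm).
- by move=> s t sC; rewrite h_nle.
- by move=> s sC; split; [apply: dm1_up | apply: dm1_dn].
- by move=> s t sC; rewrite h_nle.
Qed.

Lemma critL1 s : s \in A -> critical K F (lift_simplex s) = (s \notin C) && critical M f s.
Proof.
move=> sA; rewrite (crit_lift C f h (A0 HA) sA).
case sC: (s \in C) => /=.
  have [t tA rel] := Hpart sC.
  by rewrite andbA (negbTE (noncritA sA tA rel)).
by rewrite (critA f HM HA HB HU HI sA) ?sC // andbT.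
Qed.

Lemma crit_noC s : s \in C -> ~~ critical M f s.
Proof.
move=> sC; have [t tA rel] := Hpart sC; apply/negP => /and3P[_ /forall_inP Hu /forall_inP Hd].
case/orP: rel; rewrite in_grad.
  by move=> /and4P[_ tM ft le]; have := implyP (Hu t tM) ft; rewrite ltNge le.
by move=> /and4P[tM _ ft le]; have := implyP (Hd t tM) ft; rewrite ltNge le.
Qed.

Lemma cone_count p : #|[set s in C0 C | critical K F (cone_of s) & #|s| == p]| = (p == 2)%N.
Proof.
have [->|p2] := eqVneq p 2%N; last first.
  apply/eqP; rewrite cards_eq0; apply/eqP/setP => s.
  rewrite in_exc in_set0; apply/negP => /and3P[sC]; rewrite critC1 // => /andP[/eqP -> _].
  by rewrite eq_sym (negbTE p2).
have -> : [set s in C0 C | critical K F (cone_of s) & #|s| == 2%N] = cells C 1 :\: Pe.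
  apply/setP => s; rewrite in_exc in_setD [s \in cells C 1]inE.
  apply/and3P/and3P => [[sC0]|[sP sC s2]].
    rewrite (critC1 sC0) => /andP[s2 sP] _; split=> //.
    by apply: C0_C sC0 _; apply/eqP => s0; rewrite s0 cards0 in s2.
  by split; [apply: CC0 | rewrite critC1 ?CC0 // s2 | ].
have PE : Pe \subset cells C 1.
  apply/subsetP => e eP; have [x xV ->] := Pe_inv eP; by rewrite inE pe_C // pe_card.
rewrite cardsD (setIidPr PE) (handshake HCc Hdeg) card_in_imset; last exact: pe_inj.
by rewrite [#|V|](cardsD1 r) [r \in V]inE rC addnK.
Qed.

Lemma side1_perfect (gg : nat) :
 (forall s, critical M f s -> #|s| = 1%N -> s \in A) ->
 #|[set s in A | critical M f s & #|s| == 2%N]| = (2 * gg)%N ->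
 (forall s, critical M f s -> #|s| = 3%N -> s \in B :\: C) ->
 ncrit M f 0 = 1%N ->
 perfect_surface K gg F.
Proof.
move=> Hv He Ht Hn; split; first exact: dm1.
- rewrite ncrit_glue cone_count /= addn0 -[RHS]Hn /ncrit; congr (#|pred_of_set _|).
  apply/setP => s; rewrite in_exc in_set.
  apply/and3P/andP => [[sA]|[c /eqP s1]]; first by rewrite critL1 // => /andP[_ ->] ->.
  have sA := Hv _ c s1; rewrite sA critL1 // c s1 andbT /=.
  split=> //; by apply: contraTN c => sC; apply: crit_noC.
- rewrite ncrit_glue cone_count /= addn0 -He; congr (#|pred_of_set _|).
  apply/setP => s; rewrite !in_exc.
  apply/and3P/and3P => [[sA]|[sA c s2]]; first by rewrite critL1 // => /andP[_ ->] ->.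
  split=> //; rewrite critL1 // c andbT.
  by apply: contraTN c => sC; apply: crit_noC.
- rewrite ncrit_glue cone_count /= addn1; apply/eqP; rewrite eqSS cards_eq0.
  apply/eqP/setP => s; rewrite in_exc in_set0; apply/negP => /and3P[sA].
  rewrite critL1 // => /andP[sC c] /eqP s3.
  have := Ht _ c s3; rewrite in_setD => /andP[_ sB].
  by rewrite (inC HI sA sB) in sC.
Qed.

End Side1.

Lemma side1 (T : finType) (R : realFieldType) (M A B C : {set {set T}}) (f : {set T} -> R) (gg : nat) :
  is_complex M -> is_subcomplex A M -> is_subcomplex B M ->
  A :|: B = M -> A :&: B = C -> discrete_morse M f -> simple_closed_curve C ->
  (forall s, s \in C -> exists2 t, t \in A &
     ((s, t) \in gradient M f) || ((t, s) \in gradient M f)) ->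
  (forall s, critical M f s -> #|s| = 1%N -> s \in A) ->
  #|[set s in A | critical M f s & #|s| == 2%N]| = (2 * gg)%N ->
  (forall s, critical M f s -> #|s| = 3%N -> s \in B :\: C) ->
  ncrit M f 0 = 1%N ->
  exists f1 : {set option T} -> R,
   [/\ perfect_surface (cone_glue A C) gg f1,
       (forall s, s \in A -> f1 (lift_simplex s) = f s)
     & (forall s t, (s, t) \in gradient M f -> s \in A -> t \in A ->
           (lift_simplex s, lift_simplex t) \in gradient (cone_glue A C) f1)].
Proof.
move=> HM HA HB HU HI Hdm [HCc Cn0 HC2 Hdeg Hcon] Hpart Hv He Ht Hn.
have [r rC] : exists r, [set r] \in C.
  have [s sC] := set0Pn _ Cn0.
  have : s != set0 by apply: contraTneq sC => ->; apply: cx0.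
  case/set0Pn => v vs; exists v; apply: (cx_face HCc sC); first by rewrite sub1set.
  by apply/eqP => /setP/(_ v); rewrite !inE eqxx.
exists (ext f (h f Hcon rC)); split.
- exact: (side1_perfect HM HA HB HU HI Hdm HCc HC2 Hdeg Hcon rC Hpart Hv He Ht Hn).
- by move=> s _; rewrite ext_lift.
- by move=> s t; apply: grad_glue; apply: (A0 HA).
Qed.

End Part6.
Import Part6.

Unset Implicit Arguments.
Set Strict Implicit.
Set Printing Implicit Defensive.

Theorem theorem4p4 (R : realFieldType) (T : finType)
  (M A1 A2 C : {set {set T}}) (gM g1 g2 : nat) (f : {set T} -> R) :
  surface_of_genus M gM ->
  is_subcomplex A1 M -> is_subcomplex A2 M ->
  A1 :|: A2 = M -> A1 :&: A2 = C ->
  simple_closed_curve C ->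
  surface_of_genus (cone_glue A1 C) g1 ->
  surface_of_genus (cone_glue A2 C) g2 ->
  perfect_surface M gM f ->
  (forall s, critical M f s -> #|s| = 1%N -> s \in A1) ->
  #|[set s in A1 | critical M f s & #|s| == 2%N]| = (2 * g1)%N ->
  #|[set s in A2 :\: C | critical M f s & #|s| == 2%N]| = (2 * g2)%N ->
  (forall s, critical M f s -> #|s| = 3%N -> s \in A2 :\: C) ->
  (forall s, s \in C -> exists2 t, t \in A1 &
     ((s, t) \in gradient M f) || ((t, s) \in gradient M f)) ->
  exists (f1 f2 : {set option T} -> R),
    perfect_surface (cone_glue A1 C) g1 f1 /\
    [/\ perfect_surface (cone_glue A2 C) g2 f2,
        (forall s, s \in A1 -> f1 (lift_simplex s) = f s),
        (forall s, s \in A2 -> f2 (lift_simplex s) = f s),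
        (forall s t, (s, t) \in gradient M f -> s \in A1 -> t \in A1 ->
           (lift_simplex s, lift_simplex t) \in gradient (cone_glue A1 C) f1)
      & (forall s t, (s, t) \in gradient M f -> s \in A2 -> t \in A2 ->
           (lift_simplex s, lift_simplex t) \in gradient (cone_glue A2 C) f2)].
Proof.
move=> [[HM _ _ _ _] _ _] HA1 HA2 HU HI HSC _ _ [Hdm Hn0 _ Hn2] Hv He1 He2 Ht Hpart.
have HCc : is_complex C by case: HSC.
have [f1 [P1 E1 G1]] := side1 HM HA1 HA2 HU HI Hdm HSC Hpart Hv He1 Ht Hn0.
have HU' : A2 :|: A1 = M by rewrite setUC.
have HI' : A2 :&: A1 = C by rewrite setIC.
have [f2 [P2 E2 G2]] := side2 HM HA2 HA1 HU' HI' Hdm HCc Hpart Hv He2 Ht Hn2.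
by exists f1, f2; split.
Qed.
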